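(* Let $(X,S)$ be an $S$-metric space and $r\ge0$. If a sequence $\{x_n\}$ in $X$ is statistically convergent to $x'\in X$, then $st\text{-}LIM^r x_n=B_S[x',r]$.
   Context: An $S$-metric on a nonempty set $X$ is a function $S:X^3\to[0,\infty)$ such that for all $x,y,z,a\in X$: $S(x,y,z)=0$ if and only if $x=y=z$, and $S(x,y,z)\le S(x,x,a)+S(y,y,a)+S(z,z,a)$. $B_S[x,r]=\{y\in X: S(y,y,x)\le r\}$. For $B\subset\mathbb N$ the natural density is $\delta(B)=\lim_{n\to\infty}\frac{|\{k\in B:k\le n\}|}{n}$ when the limit exists. $\{x_n\}$ is statistically convergent to $x'$ if for every $\varepsilon>0$, $\delta(\{n: S(x_n,x_n,x')\ge\varepsilon\})=0$. For $r\ge0$, $\{x_n\}$ is $r$-statistically convergent to $x$ if for every $\varepsilon>0$, $\delta(\{n\in\mathbb N: S(x_n,x_n,x)\ge r+\varepsilon\})=0$; $st\text{-}LIM^r x_n$ denotes the set of all such $x\in X$. *)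

(* Defs.v *)
From Stdlib Require Import Reals Classical ClassicalEpsilon.
Open Scope R_scope.

Record SMetric (X : Type) : Type := {
  Sfun :> X -> X -> X -> R;
  Sfun_nonneg : forall x y z, 0 <= Sfun x y z;
  Sfun_zero : forall x y z, Sfun x y z = 0 <-> (x = y /\ y = z);
  Sfun_tri : forall x y z a, Sfun x y z <= Sfun x x a + Sfun y y a + Sfun z z a
}.

Definition closed_ball {X : Type} (S : SMetric X) (x : X) (r : R) : X -> Prop :=
  fun y => S y y x <= r.

Definition ind (B : nat -> Prop) (k : nat) : R :=
  if excluded_middle_informative (B k) then 1 else 0.

(* |{k in B : 1 <= k <= n}| as a real number (N = {1,2,...}). *)
Fixpoint count_upto (B : nat -> Prop) (n : nat) : R :=
  match n with
  | O => 0
  | S m => count_upto B m + ind B (S m)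
  end.

Definition has_density (B : nat -> Prop) (d : R) : Prop :=
  Un_cv (fun n => count_upto B (S n) / INR (S n)) d.

(* Statistical convergence of x (indexed by N = {1,2,...}; x 0 is irrelevant). *)
Definition stat_conv {X : Type} (S : SMetric X) (x : nat -> X) (x' : X) : Prop :=
  forall eps, 0 < eps -> has_density (fun n => S (x n) (x n) x' >= eps) 0.

Definition r_stat_conv {X : Type} (S : SMetric X) (r : R) (x : nat -> X) (y : X) : Prop :=
  forall eps, 0 < eps -> has_density (fun n => S (x n) (x n) y >= r + eps) 0.

Definition st_LIM {X : Type} (S : SMetric X) (r : R) (x : nat -> X) : X -> Prop :=
  fun y => r_stat_conv S r x y.

(* Main.v *)
Require Import Defs.
From Stdlib Require Import Reals Lra Lia Classical ClassicalEpsilon.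
Open Scope R_scope.

Lemma ind_nonneg (A : nat -> Prop) k : 0 <= Defs.ind A k <= 1.
Proof. unfold Defs.ind; destruct (excluded_middle_informative (A k)); split; lra. Qed.

Lemma ind_le (A B : nat -> Prop) (H : forall k, A k -> B k) k : Defs.ind A k <= Defs.ind B k.
Proof.
  unfold Defs.ind; destruct (excluded_middle_informative (A k));
  destruct (excluded_middle_informative (B k)); try lra.
  exfalso; auto.
Qed.

Lemma ind_or (A B : nat -> Prop) (H : forall k, A k \/ B k) k : 1 <= Defs.ind A k + Defs.ind B k.
Proof.
  unfold Defs.ind; destruct (excluded_middle_informative (A k));
  destruct (excluded_middle_informative (B k)); try lra.
  destruct (H k); contradiction.
Qed.

Lemma count_nonneg (A : nat -> Prop) n : 0 <= count_upto A n.
Proof. induction n; simpl; [lra|]. pose proof (ind_nonneg A (S n)); lra. Qed.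

Lemma count_le (A B : nat -> Prop) (H : forall k, A k -> B k) n :
  count_upto A n <= count_upto B n.
Proof. induction n; simpl; [lra|]. pose proof (ind_le A B H (S n)); lra. Qed.

Lemma count_or (A B : nat -> Prop) (H : forall k, A k \/ B k) n :
  INR n <= count_upto A n + count_upto B n.
Proof.
  induction n; [simpl; lra|]. rewrite S_INR; simpl count_upto.
  pose proof (ind_or A B H (S n)); lra.
Qed.

Lemma density0_sub (A B : nat -> Prop) :
  has_density B 0 -> (forall k, A k -> B k) -> has_density A 0.
Proof.
  intros HB H eps He. destruct (HB eps He) as [N HN]. exists N.
  intros n Hn. specialize (HN n Hn). unfold R_dist in *.
  rewrite Rminus_0_r in *.
  assert (Hp : 0 < / INR (S n)) by (apply Rinv_0_lt_compat; apply lt_0_INR; lia).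
  pose proof (count_nonneg A (S n)). pose proof (count_le A B H (S n)).
  unfold Rdiv in *.
  rewrite Rabs_pos_eq in *.
  - apply Rle_lt_trans with (2 := HN). apply Rmult_le_compat_r; lra.
  - apply Rmult_le_pos; lra.
  - apply Rmult_le_pos; lra.
Qed.

Lemma S_sym (X : Type) (S : SMetric X) x y : S x x y = S y y x.
Proof.
  assert (forall a b, S a a b <= S b b a).
  { intros a b. pose proof (Sfun_tri X S a a b a).
    assert (S a a a = 0) by (apply Sfun_zero; auto). lra. }
  pose proof (H x y); pose proof (H y x); lra.
Qed.

Theorem theorem4p3 (X : Type) (S : SMetric X) (r : R) (hr : 0 <= r)
  (x : nat -> X) (x' : X) :
  stat_conv S x x' ->
  forall y : X, st_LIM S r x y <-> closed_ball S x' r y.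
Proof.
  intros Hst y; split.
  - intro Hy. unfold closed_ball.
    destruct (Rle_or_lt (S y y x') r) as [|Hlt]; auto. exfalso.
    set (d := (S y y x' - r) / 2).
    assert (Hd : 0 < d) by (unfold d; lra).
    pose proof (Hy d Hd) as HA. pose proof (Hst (d/2) ltac:(lra)) as HB.
    assert (Hor : forall k, (fun n => S (x n) (x n) y >= r + d) k \/
                            (fun n => S (x n) (x n) x' >= d/2) k).
    { intro k; simpl.
      destruct (Rge_or_lt (S (x k) (x k) x') (d/2)) as [h|h]; [right; exact h|left].
      pose proof (Sfun_tri X S x' x' y (x k)).
      rewrite (S_sym X S x' (x k)) in H.
      rewrite (S_sym X S y (x k)) in H.
      rewrite (S_sym X S x' y) in H. unfold d in *. lra. }
    destruct (HA (1/2) ltac:(lra)) as [N1 H1].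
    destruct (HB (1/2) ltac:(lra)) as [N2 H2].
    specialize (H1 (max N1 N2) ltac:(lia)). specialize (H2 (max N1 N2) ltac:(lia)).
    set (n := Nat.succ (max N1 N2)) in *.
    pose proof (count_or _ _ Hor n) as Hc.
    unfold R_dist in *; rewrite Rminus_0_r in *.
    assert (Hp : 0 < INR n) by (unfold n; rewrite S_INR; pose proof (pos_INR (max N1 N2)); lra).
    pose proof (Rle_abs (count_upto (fun n0 : nat => S (x n0) (x n0) y >= r + d) n / INR n)).
    pose proof (Rle_abs (count_upto (fun n0 : nat => S (x n0) (x n0) x' >= d/2) n / INR n)).
    assert (Hs : 1 <= count_upto (fun n0 : nat => S (x n0) (x n0) y >= r + d) n / INR n
                 + count_upto (fun n0 : nat => S (x n0) (x n0) x' >= d/2) n / INR n).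
    { unfold Rdiv. rewrite <- Rmult_plus_distr_r.
      apply Rmult_le_reg_r with (INR n); auto.
      rewrite Rmult_assoc, Rinv_l by lra. lra. }
    change (Datatypes.S (Init.Nat.max N1 N2)) with n in H1, H2. lra.
  - intros Hy eps He.
    apply density0_sub with (B := fun n => S (x n) (x n) x' >= eps/2).
    + apply Hst; lra.
    + intros k Hk. unfold closed_ball in Hy.
      pose proof (Sfun_tri X S (x k) (x k) y x'). lra.
Qed.
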